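(* Let $k\in\mathbb{N}$ and let $\psi$ be a complex-valued function on $T$. The following are equivalent: (a) $M_\psi$ is bounded on $\mathcal{L}^{(k)}$; (b) $M_\psi$ is bounded on $\mathcal{L}^{(k)}_0$; (c) $\psi\in L^\infty\cap \mathcal{L}^{(k+1)}$. Furthermore, under these conditions, the operator norm $\|M_\psi\|$ satisfies $$\max\{\|\psi\|_\infty,\|\psi\|_k\}\le \|M_\psi\|\le \|\psi\|_\infty+\sup_{v\in T^*}|v|\prod_{j=1}^{k}\ell_j(|v|)\,D\psi(v).$$
   Context: $T$ is a tree (locally finite, connected, simply connected graph, identified with its vertex set) without terminal vertices, rooted at a vertex $o$. For $v\in T$, $|v|$ is the number of edges of the path from $o$ to $v$; for $v\ne o$, $v^-$ denotes the neighbor of $v$ on the path from $o$ to $v$ (the parent of $v$). $T^*=T\setminus\{o\}$. For a function $f:T\to\mathbb{C}$ and $v\in T^*$, $Df(v)=|f(v)-f(v^-)|$. For $x\ge1$ define $\ell_0(x)=1$, $\ell_1(x)=1+\ln x$, and $\ell_j(x)=1+\ln\ell_{j-1}(x)$ for $j\ge2$. For $k\in\mathbb{N}$, $\mathcal{L}^{(k)}$ is the set of $f:T\to\mathbb{C}$ with $\sup_{v\in T^*}|v|\prod_{j=0}^{k-1}\ell_j(|v|)Df(v)<\infty$, with norm $\|f\|_k=|f(o)|+\sup_{v\in T^*}|v|\prod_{j=0}^{k-1}\ell_j(|v|)Df(v)$. $\mathcal{L}^{(k)}_0$ is the subspace of $f\in\mathcal{L}^{(k)}$ with $\lim_{|v|\to\infty}|v|\prod_{j=0}^{k-1}\ell_j(|v|)Df(v)=0$.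 $L^\infty$ is the space of bounded functions on $T$ with $\|f\|_\infty=\sup_{v\in T}|f(v)|$. $M_\psi f=\psi f$ is the multiplication operator with symbol $\psi$; $\|M_\psi\|$ denotes its operator norm on the space ($\mathcal{L}^{(k)}$ or $\mathcal{L}^{(k)}_0$) on which it acts. *)

(* Defs.v *)
From Stdlib Require Import Reals List ClassicalEpsilon.
From Coquelicot Require Import Coquelicot.
Open Scope R_scope.

(* A rooted tree is encoded by its vertex type V, its root o, and the parent
   map par (v^- = par v for v <> o; par o = o is a dummy value).
   Every vertex reaches the root by iterating par; the graph with edges
   {v, par v} (v <> o) is then connected and acyclic, i.e. a tree. *)
Definition child {V : Type} (o : V) (par : V -> V) (v w : V) : Prop :=
  w <> o /\ par w = v.

Definition rooted_tree {V : Type} (o : V) (par : V -> V) : Prop :=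
  par o = o /\
  (forall v : V, exists n : nat, Nat.iter n par v = o) /\
  (forall v : V, exists l : list V, forall w, child o par v w -> In w l) /\
  (* no terminal vertices: every vertex has at least two neighbours *)
  (exists a b : V, a <> b /\ child o par o a /\ child o par o b) /\
  (forall v : V, v <> o -> exists w, child o par v w).

Section TreeSpaces.
Context {V : Type} (o : V) (par : V -> V).

Definition is_depth (v : V) (n : nat) : Prop :=
  Nat.iter n par v = o /\ forall m, (m < n)%nat -> Nat.iter m par v <> o.

Definition depth (v : V) : nat := epsilon (inhabits 0%nat) (is_depth v).

Fixpoint ell (j : nat) (x : R) : R :=
  match j with
  | O => 1
  | S O => 1 + ln x
  | S j' => 1 + ln (ell j' x)
  end.

Fixpoint prodl (a n : nat) (x : R) : R :=
  match n with
  | O => 1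
  | S n' => prodl a n' x * ell (a + n') x
  end.

Definition Dop (f : V -> C) (v : V) : R := Cmod (Cminus (f v) (f (par v))).

Definition wD (k : nat) (f : V -> C) (v : V) : R :=
  INR (depth v) * prodl 0 k (INR (depth v)) * Dop f v.

Definition Lk (k : nat) (f : V -> C) : Prop :=
  exists M : R, forall v, v <> o -> wD k f v <= M.

Definition Lk0 (k : nat) (f : V -> C) : Prop :=
  Lk k f /\
  forall eps : R, 0 < eps -> exists N : nat,
    forall v, v <> o -> (N <= depth v)%nat -> Rabs (wD k f v) < eps.

Definition normk (k : nat) (f : V -> C) : Rbar :=
  Rbar_plus (Finite (Cmod (f o)))
    (Lub_Rbar (fun r => exists v, v <> o /\ r = wD k f v)).

Definition Linf (f : V -> C) : Prop := exists M : R, forall v, Cmod (f v) <= M.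

Definition supnorm (f : V -> C) : Rbar := Lub_Rbar (fun r => exists v, r = Cmod (f v)).

Definition upper_sup (k : nat) (psi : V -> C) : Rbar :=
  Lub_Rbar (fun r => exists v, v <> o /\
     r = INR (depth v) * prodl 1 k (INR (depth v)) * Dop psi v).

Definition Mop (psi f : V -> C) : V -> C := fun v => Cmult (psi v) (f v).

Definition bounded_on (X : (V -> C) -> Prop) (nrm : (V -> C) -> Rbar)
  (psi : V -> C) : Prop :=
  (forall f, X f -> X (Mop psi f)) /\
  exists Cst : R, 0 <= Cst /\
    forall f, X f -> Rbar_le (nrm (Mop psi f)) (Rbar_mult (Finite Cst) (nrm f)).

Definition opnorm (X : (V -> C) -> Prop) (nrm : (V -> C) -> Rbar)
  (psi : V -> C) : Rbar :=
  Lub_Rbar (fun r => exists f, X f /\ Rbar_le (nrm f) (Finite 1) /\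
                                 Finite r = nrm (Mop psi f)).

Definition opnorm_estimate (X : (V -> C) -> Prop) (k : nat) (psi : V -> C) : Prop :=
  Rbar_le (supnorm psi) (opnorm X (normk k) psi) /\
  Rbar_le (normk k psi) (opnorm X (normk k) psi) /\
  Rbar_le (opnorm X (normk k) psi) (Rbar_plus (supnorm psi) (upper_sup k psi)).

End TreeSpaces.

(* Main.v *)
Require Import Defs.
From Stdlib Require Import Reals.
From Coquelicot Require Import Coquelicot.
From Stdlib Require Import Lra Lia ZArith Classical ClassicalEpsilon FunctionalExtensionality.
Open Scope R_scope.

Lemma ln_le_sub1 t : 0 < t -> ln t <= t - 1.
Proof. intros Ht. pose proof (exp_ineq1_le (ln t)). rewrite exp_ln in H; lra. Qed.

Lemma ln_diff_up a b : 0 < a -> 0 < b -> ln b - ln a <= (b - a) / a.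
Proof.
  intros Ha Hb. rewrite <- ln_div by lra.
  pose proof (ln_le_sub1 (b/a)). assert (0 < b / a) by (apply Rdiv_lt_0_compat; lra).
  replace ((b - a)/a) with (b/a - 1) by (field; lra). auto.
Qed.

Lemma ln_diff_lo a b : 0 < a -> 0 < b -> (b - a) / b <= ln b - ln a.
Proof.
  intros Ha Hb. pose proof (ln_diff_up b a Hb Ha).
  replace ((b-a)/b) with (-((a-b)/b)) by (field; lra). lra.
Qed.

Lemma ln0 : ln 0 = 0.
Proof. unfold ln. case Rlt_dec; intros H; [exfalso; apply (Rlt_irrefl 0 H)|reflexivity]. Qed.

Lemma ell_SS j x : ell (S (S j)) x = 1 + ln (ell (S j) x).
Proof. reflexivity. Qed.

Lemma ell_0 j : ell j 0 = 1.
Proof.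
  destruct j as [|j]; [reflexivity|]. induction j as [|j IH].
  - simpl. rewrite ln0. lra.
  - rewrite ell_SS, IH, ln_1. lra.
Qed.

Lemma ell_1 j : ell j 1 = 1.
Proof.
  destruct j as [|j]; [reflexivity|]. induction j as [|j IH].
  - simpl. rewrite ln_1. lra.
  - rewrite ell_SS, IH, ln_1. lra.
Qed.

Lemma ell_ge1 j x : 1 <= x -> 1 <= ell j x.
Proof.
  intros Hx. destruct j as [|j]; [simpl; lra|]. induction j as [|j IH].
  - simpl. assert (0 <= ln x) by (rewrite <- ln_1; apply ln_le; lra). lra.
  - rewrite ell_SS. assert (0 <= ln (ell (S j) x)) by (rewrite <- ln_1; apply ln_le; lra). lra.
Qed.

Lemma INR_cases n : INR n = 0 \/ 1 <= INR n.
Proof. destruct n. left; reflexivity. right. apply (le_INR 1). lia. Qed.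

Lemma ell_ge1_nat j n : 1 <= ell j (INR n).
Proof. destruct (INR_cases n) as [H|H]. rewrite H, ell_0; lra. now apply ell_ge1. Qed.

Lemma prodl_ge1_nat a m n : 1 <= prodl a m (INR n).
Proof.
  induction m; simpl. lra. pose proof (ell_ge1_nat (a+m) n). nra.
Qed.

Lemma prodl_ge1 a m x : 1 <= x -> 1 <= prodl a m x.
Proof.
  intro Hx. induction m; simpl. lra. pose proof (ell_ge1 (a+m) x Hx). nra.
Qed.

Lemma prodl_1 a m : prodl a m 1 = 1.
Proof. induction m; simpl. reflexivity. rewrite IHm, ell_1. lra. Qed.

Lemma prodl_S a m x : prodl a (S m) x = ell a x * prodl (S a) m x.
Proof.
  induction m. simpl. rewrite Nat.add_0_r. lra.
  change (prodl a (S (S m)) x) with (prodl a (S m) x * ell (a + S m) x).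
  rewrite IHm. change (prodl (S a) (S m) x) with (prodl (S a) m x * ell (S a + m) x). replace (a + S m)%nat with (S a + m)%nat by lia. ring.
Qed.

Lemma prodl_0S m x : prodl 0 (S m) x = prodl 1 m x.
Proof. rewrite prodl_S. simpl. lra. Qed.

Lemma ell_inc_lo k x : 1 <= x ->
  / ((x + 1) * prodl 0 (S k) (x + 1)) <= ell (S k) (x + 1) - ell (S k) x.
Proof.
  intros Hx. induction k as [|k IH].
  - simpl. rewrite Rmult_1_l, Rmult_1_r.
    pose proof (ln_diff_lo x (x+1)). replace ((x+1-x)/(x+1)) with (/(x+1)) in H by (field; lra).
    assert (0 < x) by lra. assert (0 < x+1) by lra. specialize (H H0 H1). lra.
  - rewrite !ell_SS.
    pose proof (ell_ge1 (S k) x Hx) as H1. pose proof (ell_ge1 (S k) (x+1)) as H2.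
    pose proof (ln_diff_lo (ell (S k) x) (ell (S k) (x+1))) as H3.
    pose proof (prodl_ge1 0 (S k) (x+1)) as H4.
    change (prodl 0 (S (S k)) (x + 1)) with (prodl 0 (S k) (x+1) * ell (S k) (x+1)).
    assert (/ ((x + 1) * (prodl 0 (S k) (x + 1) * ell (S k) (x + 1)))
      = / ((x + 1) * prodl 0 (S k) (x + 1)) / ell (S k) (x+1)) by (field; lra).
    rewrite H. specialize (H2 ltac:(lra)). specialize (H3 ltac:(lra) ltac:(lra)).
    assert (/ ((x + 1) * prodl 0 (S k) (x + 1)) / ell (S k) (x+1) <=
      (ell (S k) (x + 1) - ell (S k) x) / ell (S k) (x + 1)).
    { unfold Rdiv. apply Rmult_le_compat_r. left; apply Rinv_0_lt_compat; lra. apply IH. }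
    lra.
Qed.

Lemma ell_inc_up k x : 1 <= x ->
  ell (S k) (x + 1) - ell (S k) x <= / (x * prodl 0 (S k) x).
Proof.
  intros Hx. induction k as [|k IH].
  - simpl. rewrite Rmult_1_l, Rmult_1_r.
    pose proof (ln_diff_up x (x+1)). replace ((x+1-x)/x) with (/x) in H by (field; lra).
    assert (1 + ln (x + 1) - (1 + ln x) = ln (x+1) - ln x) by ring. rewrite H0.
    apply H; lra.
  - rewrite !ell_SS.
    pose proof (ell_ge1 (S k) x Hx) as H1. pose proof (ell_ge1 (S k) (x+1)) as H2.
    pose proof (ln_diff_up (ell (S k) x) (ell (S k) (x+1))) as H3.
    pose proof (prodl_ge1 0 (S k) x Hx) as H4.
    change (prodl 0 (S (S k)) x) with (prodl 0 (S k) x * ell (S k) x).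
    assert (/ (x * (prodl 0 (S k) x * ell (S k) x))
      = / (x * prodl 0 (S k) x) / ell (S k) x) by (field; lra).
    rewrite H. replace (1 + ln (ell (S k) (x + 1)) - (1 + ln (ell (S k) x))) with
      (ln (ell (S k) (x + 1)) - ln (ell (S k) x)) by ring.
    specialize (H2 ltac:(lra)). specialize (H3 ltac:(lra) ltac:(lra)).
    assert ((ell (S k) (x + 1) - ell (S k) x) / ell (S k) x <= / (x * prodl 0 (S k) x) / ell (S k) x).
    { unfold Rdiv. apply Rmult_le_compat_r. left; apply Rinv_0_lt_compat; lra. apply IH. }
    lra.
Qed.

Lemma ln2_le1 : ln 2 <= 1.
Proof. pose proof (ln_le_sub1 2). lra. Qed.

Lemma ell_double j x : 1 <= x -> ell j (x + 1) <= 2 * ell j x.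
Proof.
  intros Hx. destruct j as [|j]; [simpl; lra|]. induction j as [|j IH].
  - simpl. assert (ln (x+1) <= ln (2*x)) by (apply ln_le; lra).
    rewrite ln_mult in H by lra. pose proof ln2_le1.
    assert (0 <= ln x) by (rewrite <- ln_1; apply ln_le; lra). lra.
  - rewrite !ell_SS. pose proof (ell_ge1 (S j) x Hx).
    assert (ln (ell (S j) (x+1)) <= ln (2*ell (S j) x)).
    { apply ln_le; [apply Rlt_le_trans with 1; [lra|apply ell_ge1; lra]|exact IH]. }
    rewrite ln_mult in H0 by lra. pose proof ln2_le1.
    assert (0 <= ln (ell (S j) x)) by (rewrite <- ln_1; apply ln_le; lra). lra.
Qed.

Lemma ell_double_nat j n : ell j (INR (S n)) <= 2 * ell j (INR n).
Proof.
  rewrite S_INR. destruct (INR_cases n) as [H|H].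
  - rewrite H, Rplus_0_l, ell_1, ell_0. lra.
  - now apply ell_double.
Qed.

Lemma prodl_double a m x : 1 <= x -> prodl a m (x + 1) <= 2 ^ m * prodl a m x.
Proof.
  intros Hx. induction m; simpl. lra.
  pose proof (ell_double (a+m) x Hx). pose proof (ell_ge1 (a+m) (x+1)).
  pose proof (prodl_ge1 a m (x+1)). pose proof (ell_ge1 (a+m) x Hx).
  pose proof (prodl_ge1 a m x Hx).
  apply Rle_trans with (2 ^ m * prodl a m x * (2 * ell (a + m) x)).
  specialize (H0 ltac:(lra)). specialize (H1 ltac:(lra)).
  { apply Rmult_le_compat; lra. }
  assert (0 <= 2 ^ m) by (apply pow_le; lra).
  replace (2 ^ S m) with (2 * 2 ^ m) by (simpl; ring).
  assert (0 <= 2 ^ m * prodl a m x) by nra.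
  nra.
Qed.

Lemma nat_large r : exists N : nat, r <= INR N.
Proof.
  destruct (archimed r) as [H1 _].
  exists (Z.to_nat (up r)). destruct (Z.le_gt_cases 0 (up r)).
  - rewrite INR_IZR_INZ, Z2Nat.id by lia. lra.
  - assert (IZR (up r) <= 0) by (apply IZR_le; lia). pose proof (pos_INR (Z.to_nat (up r))). lra.
Qed.

Lemma ell_unbounded k B : exists N : nat, forall n, (N <= n)%nat -> B <= ell (S k) (INR n).
Proof.
  revert B. induction k as [|k IH]; intros B.
  - destruct (nat_large (exp (B - 1))) as [N HN]. exists N. intros n Hn.
    apply le_INR in Hn. simpl. pose proof (exp_pos (B-1)).
    assert (ln (exp (B-1)) <= ln (INR n)) by (apply ln_le; lra).
    rewrite ln_exp in H0. lra.
  - destruct (IH (exp (B - 1))) as [N HN]. exists N. intros n Hn.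
    rewrite ell_SS. specialize (HN n Hn). pose proof (exp_pos (B-1)).
    assert (ln (exp (B-1)) <= ln (ell (S k) (INR n))) by (apply ln_le; lra).
    rewrite ln_exp in H0. lra.
Qed.

Fixpoint Hs (k n : nat) : R :=
  match n with
  | O => 0
  | S m => Hs k m + / (INR (S m) * prodl 0 k (INR (S m)))
  end.

Lemma Hs_mono k n : Hs k n <= Hs k (S n).
Proof.
  change (Hs k (S n)) with (Hs k n + / (INR (S n) * prodl 0 k (INR (S n)))).
  pose proof (prodl_ge1_nat 0 k (S n)). pose proof (pos_INR n).
  rewrite S_INR in *. assert (0 < / ((INR n + 1) * prodl 0 k (INR n + 1))).
  apply Rinv_0_lt_compat. nra. lra.
Qed.

Lemma Hs_le_ell k n : Hs (S k) n <= ell (S k) (INR n).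
Proof.
  induction n as [|n IH].
  - change (Hs (S k) 0) with 0. change (INR 0) with 0. rewrite ell_0. lra.
  - destruct (INR_cases n) as [H|H].
    + destruct n; [|pose proof (pos_INR n); rewrite S_INR in H; lra].
      change (Hs (S k) 1) with (0 + / (INR 1 * prodl 0 (S k) (INR 1))).
      change (INR 1) with 1. rewrite prodl_1, ell_1. lra.
    + change (Hs (S k) (S n)) with (Hs (S k) n + / (INR (S n) * prodl 0 (S k) (INR (S n)))).
      rewrite S_INR. pose proof (ell_inc_lo k (INR n) H). lra.
Qed.

Lemma min_ex (P : nat -> Prop) n : P n -> exists m, P m /\ forall j, (j < m)%nat -> ~ P j.
Proof.
  induction n as [n IH] using lt_wf_ind. intros Hn.
  destruct (classic (exists j, (j < n)%nat /\ P j)) as [[j [Hj Pj]]|Hno].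
  - exact (IH j Hj Pj).
  - exists n. split; auto. intros j Hj Pj. apply Hno; eauto.
Qed.

Lemma lub_ge (E : R -> Prop) x : E x -> Rbar_le x (Lub_Rbar E).
Proof. intros H. destruct (Lub_Rbar_correct E) as [Hub _]. apply Hub, H. Qed.

Lemma lub_le (E : R -> Prop) b : (forall x, E x -> Rbar_le x b) -> Rbar_le (Lub_Rbar E) b.
Proof. intros H. destruct (Lub_Rbar_correct E) as [_ Hl]. apply Hl. exact H. Qed.

Lemma lub_fin (E : R -> Prop) : (exists x, E x) -> (exists M, forall x, E x -> x <= M) ->
  exists l, Lub_Rbar E = Finite l /\ (forall x, E x -> x <= l) /\
    (forall M, (forall x, E x -> x <= M) -> l <= M).
Proof.
  intros [x0 Hx0] [M HM].
  assert (H1 := lub_ge E x0 Hx0).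
  assert (H2 : Rbar_le (Lub_Rbar E) M) by (apply lub_le; intros; simpl; auto).
  destruct (Lub_Rbar E) as [l| |] eqn:Hl; simpl in *; try contradiction.
  exists l. split; auto. split.
  - intros x Hx. pose proof (lub_ge E x Hx). rewrite Hl in H. exact H.
  - intros M' HM'. assert (Rbar_le (Lub_Rbar E) M') by (apply lub_le; intros; simpl; auto).
    rewrite Hl in H. exact H.
Qed.

Lemma Cmod_minus_le a b : Cmod (a - b) <= Cmod a + Cmod b.
Proof. unfold Cminus. eapply Rle_trans. apply Cmod_triangle. rewrite Cmod_opp. lra. Qed.

Lemma pos_mul_le a x s : 0 < a -> a * x <= s -> x <= s * / a.
Proof.
  intros Ha H. replace x with ((a * x) * / a) by (field; lra).
  apply Rmult_le_compat_r. left; apply Rinv_0_lt_compat; lra. exact H.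
Qed.

Section Tree.
Context {V : Type} (o : V) (par : V -> V) (HT : rooted_tree o par).

Notation dep := (depth o par).

Lemma depth_spec v : is_depth o par v (dep v).
Proof.
  unfold depth. apply epsilon_spec. destruct HT as [_ [Hreach _]].
  destruct (Hreach v) as [n Hn].
  destruct (min_ex (fun n => Nat.iter n par v = o) n Hn) as [m [Hm Hmin]].
  exists m. split; auto.
Qed.

Lemma is_depth_unique v n m : is_depth o par v n -> is_depth o par v m -> n = m.
Proof.
  intros [H1 H2] [H3 H4]. destruct (lt_eq_lt_dec n m) as [[H|H]|H]; auto.
  - exfalso. exact (H4 n H H1).
  - exfalso. exact (H2 m H H3).
Qed.

Lemma depth_o : dep o = 0%nat.
Proof.
  apply (is_depth_unique o). apply depth_spec. split. reflexivity. intros; lia.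
Qed.

Lemma depth_0 v : dep v = 0%nat -> v = o.
Proof. intros H. destruct (depth_spec v) as [H1 _]. rewrite H in H1. exact H1. Qed.

Lemma depth_par v : v <> o -> dep v = S (dep (par v)).
Proof.
  intros Hv. destruct (depth_spec v) as [H1 H2].
  destruct (dep v) as [|m] eqn:E. { simpl in H1. contradiction. }
  f_equal. apply (is_depth_unique (par v)). split.
  - rewrite <- Nat.iter_succ_r. exact H1.
  - intros j Hj. rewrite <- Nat.iter_succ_r. apply H2. lia.
  - apply depth_spec.
Qed.

Lemma exists_nonroot : exists a, a <> o.
Proof. destruct HT as [_ [_ [_ [[a [b [_ [[Ha _] _]]]] _]]]]. eauto. Qed.

Lemma depth_ge1 v : v <> o -> 1 <= INR (dep v).
Proof. intros Hv. rewrite (depth_par v Hv). apply (le_INR 1). lia. Qed.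

Lemma wD_nonneg k f v : 0 <= wD o par k f v.
Proof.
  unfold wD. pose proof (pos_INR (dep v)). pose proof (prodl_ge1_nat 0 k (dep v)).
  pose proof (Cmod_ge_0 (f v - f (par v))%C). unfold Dop.
  apply Rmult_le_pos; [nra|lra].
Qed.

Lemma Dop_le_wD k f v : v <> o -> Dop par f v <= wD o par k f v.
Proof.
  intros Hv. unfold wD. pose proof (depth_ge1 v Hv). pose proof (prodl_ge1_nat 0 k (dep v)).
  assert (0 <= Dop par f v) by apply Cmod_ge_0.
  assert (1 <= INR (dep v) * prodl 0 k (INR (dep v))) by nra. nra.
Qed.

Lemma Cmod_step (f : V -> C) v : Cmod (f v) <= Cmod (f (par v)) + Dop par f v.
Proof.
  unfold Dop. replace (f v) with (f (par v) + (f v - f (par v)))%C at 1 by ring.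
  apply Cmod_triangle.
Qed.

Lemma Dop_mult_up psi f v :
  Dop par (Mop psi f) v <= Cmod (psi v) * Dop par f v + Cmod (f (par v)) * Dop par psi v.
Proof.
  unfold Dop, Mop.
  replace (psi v * f v - psi (par v) * f (par v))%C with
    (psi v * (f v - f (par v)) + f (par v) * (psi v - psi (par v)))%C by ring.
  eapply Rle_trans. apply Cmod_triangle. rewrite !Cmod_mult. lra.
Qed.

Lemma Dop_mult_lo psi f v :
  Cmod (f (par v)) * Dop par psi v <= Dop par (Mop psi f) v + Cmod (psi v) * Dop par f v.
Proof.
  unfold Dop, Mop.
  assert (E : (f (par v) * (psi v - psi (par v)))%C =
    ((psi v * f v - psi (par v) * f (par v)) - psi v * (f v - f (par v)))%C) by ring.
  rewrite <- Cmod_mult, E. eapply Rle_trans. apply Cmod_minus_le. rewrite Cmod_mult. lra.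
Qed.

Definition wset k f := fun r => exists v, v <> o /\ r = wD o par k f v.

Lemma wset_ne k f : exists x, wset k f x.
Proof. destruct exists_nonroot as [a Ha]. exists (wD o par k f a). exists a. auto. Qed.

Lemma normk_fin k f : Lk o par k f -> exists s, normk o par k f = Finite (Cmod (f o) + s) /\
  (forall v, v <> o -> wD o par k f v <= s) /\ 0 <= s /\
  (forall M, (forall v, v <> o -> wD o par k f v <= M) -> s <= M).
Proof.
  intros [M HM]. destruct (lub_fin (wset k f)) as [s [Hs [Hub Hl]]].
  - apply wset_ne.
  - exists M. intros x [v [Hv ->]]. auto.
  - exists s. unfold normk. fold (wset k f). rewrite Hs. split. reflexivity. split.
    + intros v Hv. apply Hub. exists v; auto.
    + split.
      * destruct exists_nonroot as [a Ha]. pose proof (wD_nonneg k f a).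
        assert (wD o par k f a <= s) by (apply Hub; exists a; auto). lra.
      * intros M' HM'. apply Hl. intros x [v [Hv ->]]. auto.
Qed.

Lemma normk_ge_wD k f v : v <> o -> Rbar_le (wD o par k f v) (normk o par k f).
Proof.
  intros Hv. unfold normk. fold (wset k f).
  assert (H := lub_ge (wset k f) (wD o par k f v) (ex_intro _ v (conj Hv eq_refl))).
  pose proof (Cmod_ge_0 (f o)).
  destruct (Lub_Rbar (wset k f)); simpl in *; auto; lra.
Qed.

Lemma normk_ge_o k f : Rbar_le (Cmod (f o)) (normk o par k f).
Proof.
  unfold normk. fold (wset k f). destruct exists_nonroot as [a Ha].
  assert (H := lub_ge (wset k f) (wD o par k f a) (ex_intro _ a (conj Ha eq_refl))).
  pose proof (wD_nonneg k f a).
  destruct (Lub_Rbar (wset k f)); simpl in *; auto; lra.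
Qed.

Lemma normk_le k f M B : (forall v, v <> o -> wD o par k f v <= M) ->
  Cmod (f o) + M <= B -> Rbar_le (normk o par k f) B.
Proof.
  intros HM HB. unfold normk. fold (wset k f).
  assert (Rbar_le (Lub_Rbar (wset k f)) M).
  { apply lub_le. intros x [v [Hv ->]]. simpl. auto. }
  destruct (Lub_Rbar (wset k f)); simpl in *; auto; lra.
Qed.

Lemma val_bound k f c : Rbar_le (normk o par k f) (Finite c) ->
  forall w, Cmod (f w) <= (1 + INR (dep w)) * c.
Proof.
  intros Hc.
  assert (Ho : Cmod (f o) <= c).
  { pose proof (normk_ge_o k f). eapply (Rbar_le_trans (Finite _) _ (Finite c)) in H; eauto. }
  assert (Hw : forall v, v <> o -> wD o par k f v <= c).
  { intros v Hv. pose proof (normk_ge_wD k f v Hv).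
    eapply (Rbar_le_trans (Finite _) _ (Finite c)) in H; eauto. }
  intros w. remember (dep w) as n eqn:En. revert w En. induction n as [|n IH]; intros w En.
  - symmetry in En. rewrite (depth_0 w En). simpl. lra.
  - assert (Hwo : w <> o). { intros ->. rewrite depth_o in En. discriminate. }
    rewrite (depth_par w Hwo) in En. injection En as En.
    specialize (IH (par w) En). pose proof (Cmod_step f w).
    pose proof (Dop_le_wD k f w Hwo). pose proof (Hw w Hwo).
    rewrite S_INR. lra.
Qed.

Lemma val_H k f s : (forall v, v <> o -> wD o par k f v <= s) ->
  forall w, Cmod (f w) <= Cmod (f o) + s * Hs k (dep w).
Proof.
  intros Hw w. remember (dep w) as n eqn:En. revert w En. induction n as [|n IH]; intros w En.
  - symmetry in En. rewrite (depth_0 w En). simpl. lra.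
  - assert (Hwo : w <> o). { intros ->. rewrite depth_o in En. discriminate. }
    pose proof (Hw w Hwo) as Hb. unfold wD in Hb. rewrite <- En in Hb.
    rewrite (depth_par w Hwo) in En. injection En as En.
    specialize (IH (par w) En). pose proof (Cmod_step f w).
    pose proof (prodl_ge1_nat 0 k (S n)). pose proof (pos_INR (S n)).
    assert (0 < INR (S n)) by (apply lt_0_INR; lia).
    assert (Dop par f w <= s * / (INR (S n) * prodl 0 k (INR (S n)))).
    { apply pos_mul_le. nra. exact Hb. }
    change (Hs k (S n)) with (Hs k n + / (INR (S n) * prodl 0 k (INR (S n)))). lra.
Qed.

Lemma val_H_tail k f A e N : (forall v, v <> o -> (N <= dep v)%nat -> wD o par k f v <= e) ->
  (forall w, dep w = N -> Cmod (f w) <= A) ->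
  forall w, (N <= dep w)%nat -> Cmod (f w) <= A + e * (Hs k (dep w) - Hs k N).
Proof.
  intros Hw HA. assert (forall j w, dep w = (N + j)%nat -> Cmod (f w) <= A + e * (Hs k (dep w) - Hs k N)).
  2:{ intros w Hw'. apply (H (dep w - N)%nat). lia. }
  induction j as [|j IH]; intros w En.
  - rewrite En, Nat.add_0_r. rewrite Rminus_diag, Rmult_0_r, Rplus_0_r. apply HA. lia.
  - assert (Hwo : w <> o). { intros ->. rewrite depth_o in En. lia. }
    pose proof (Hw w Hwo ltac:(lia)) as Hb. unfold wD in Hb. rewrite En in Hb.
    replace (N + S j)%nat with (S (N + j)) in * by lia.
    rewrite En. rewrite (depth_par w Hwo) in En. injection En as En.
    specialize (IH (par w) ltac:(lia)). rewrite En in IH. pose proof (Cmod_step f w).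
    pose proof (prodl_ge1_nat 0 k (S (N+j))).
    assert (0 < INR (S (N+j))) by (apply lt_0_INR; lia).
    assert (Dop par f w <= e * / (INR (S (N+j)) * prodl 0 k (INR (S (N+j))))).
    { apply pos_mul_le. nra. exact Hb. }
    change (Hs k (S (N+j))) with (Hs k (N+j) + / (INR (S (N+j)) * prodl 0 k (INR (S (N+j))))).
    lra.
Qed.

End Tree.

Lemma pow_le_lemma a L K : 0 <= a -> 0 <= L -> 0 < K ->
  (forall n, a ^ n <= K * L ^ n) -> a <= L.
Proof.
  intros Ha HL HK H. destruct (Rle_or_lt a L) as [|Hlt]; auto. exfalso.
  destruct (Req_dec L 0) as [HL0|HL0].
  - specialize (H 1%nat). subst. simpl in H. lra.
  - assert (HLp : 0 < L) by lra. set (q := a / L - 1).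
    assert (Hq : 0 < q). { unfold q. apply Rlt_0_minus. apply (Rmult_lt_reg_r L); [lra|].
      field_simplify; lra. }
    destruct (nat_large (K / q)) as [n Hn].
    specialize (H n). pose proof (Rle_pow_lin q n ltac:(lra)).
    assert (Ha' : a = L * (1 + q)) by (unfold q; field; lra).
    rewrite Ha', Rpow_mult_distr in H.
    assert (0 < L ^ n) by (apply pow_lt; lra).
    assert ((1 + q) ^ n <= K). { apply (Rmult_le_reg_l (L ^ n)); lra. }
    assert (K / q * q = K) by (field; lra).
    assert (INR n * q >= K / q * q) by (apply Rle_ge, Rmult_le_compat_r; lra). lra.
Qed.

Section Tree2.
Context {V : Type} (o : V) (par : V -> V) (HT : rooted_tree o par).
Notation dep := (depth o par).

Definition onef : V -> C := fun _ => RtoC 1.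

Lemma wD_const k (z : C) v : wD o par k (fun _ => z) v = 0.
Proof. unfold wD, Dop. replace (z - z)%C with (RtoC 0) by ring. rewrite Cmod_0. ring. Qed.

Lemma Lk_const k z : Lk o par k (fun _ => z).
Proof. exists 0. intros v _. rewrite wD_const. lra. Qed.

Lemma Lk0_const k z : Lk0 o par k (fun _ => z).
Proof. split. apply Lk_const. intros eps Heps. exists 0%nat. intros. rewrite wD_const, Rabs_R0. auto. Qed.

Lemma normk_const k z : normk o par k (fun _ => z) = Finite (Cmod z).
Proof.
  destruct (normk_fin o par HT k _ (Lk_const k z)) as [s [Hn [_ [Hs Hl]]]].
  rewrite Hn. assert (s <= 0). { apply Hl. intros. rewrite wD_const. lra. }
  f_equal. lra.
Qed.

Definition gN (K N : nat) : V -> C := fun v => RtoC (ell K (INR (Nat.min (dep v) N))).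

Lemma gN_o K N : gN K N o = RtoC 1.
Proof. unfold gN. rewrite (depth_o o par HT). simpl. rewrite ell_0. reflexivity. Qed.

Lemma wD_gN k N v : v <> o -> wD o par (S k) (gN (S k) N) v <= 2 ^ (S (S k)).
Proof.
  intros Hv. unfold wD, Dop, gN. rewrite (depth_par o par HT v Hv).
  set (p := dep (par v)). rewrite <- RtoC_minus, Cmod_R.
  assert (H2 : 0 <= 2 ^ (S (S k))) by (apply pow_le; lra).
  destruct (le_lt_dec (S p) N) as [Hle|Hlt].
  - rewrite !Nat.min_l by lia. destruct (INR_cases p) as [H0|H1].
    + assert (p = 0%nat) by (destruct p; [reflexivity|rewrite S_INR in H0; pose proof (pos_INR p); lra]).
      rewrite H. change (INR 1) with 1. change (INR 0) with 0. rewrite ell_1, ell_0.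
      rewrite Rminus_diag, Rabs_R0, Rmult_0_r. exact H2.
    + rewrite S_INR. pose proof (ell_inc_lo k (INR p) H1). pose proof (ell_inc_up k (INR p) H1).
      pose proof (prodl_ge1 0 (S k) (INR p + 1) ltac:(lra)).
      pose proof (prodl_ge1 0 (S k) (INR p) H1).
      assert (0 < / ((INR p + 1) * prodl 0 (S k) (INR p + 1))) by (apply Rinv_0_lt_compat; nra).
      rewrite Rabs_pos_eq by lra.
      set (a := INR p * prodl 0 (S k) (INR p)).
      set (b := (INR p + 1) * prodl 0 (S k) (INR p + 1)).
      set (dd := ell (S k) (INR p + 1) - ell (S k) (INR p)).
      assert (Ha : 0 < a) by (unfold a; nra).
      assert (Hb : b <= 2 ^ (S (S k)) * a).
      { unfold a, b. pose proof (prodl_double 0 (S k) (INR p) H1).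
        assert (INR p + 1 <= 2 * INR p) by lra.
        replace (2 ^ S (S k) * (INR p * prodl 0 (S k) (INR p))) with
          ((2 * INR p) * (2 ^ (S k) * prodl 0 (S k) (INR p))) by (simpl; ring).
        apply Rmult_le_compat; lra. }
      assert (Hd : dd <= / a) by exact H0.
      assert (0 <= dd) by (unfold dd; lra).
      assert (Hbd : b * dd <= 2 ^ (S (S k)) * a * / a).
      { apply Rmult_le_compat; try lra. unfold b; nra. }
      replace (2 ^ S (S k) * a * / a) with (2 ^ S (S k)) in Hbd by (field; lra).
      exact Hbd.
  - rewrite !Nat.min_r by lia. rewrite Rminus_diag, Rabs_R0, Rmult_0_r. exact H2.
Qed.

Lemma wD_gN_far k N v : v <> o -> (N < dep v)%nat -> wD o par k (gN k N) v = 0.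
Proof.
  intros Hv Hd. unfold wD, Dop, gN. rewrite (depth_par o par HT v Hv) in *.
  rewrite !Nat.min_r by lia. rewrite <- RtoC_minus, Cmod_R, Rminus_diag, Rabs_R0. ring.
Qed.

Lemma gN_par k N v : v <> o -> (dep v <= N)%nat ->
  Cmod (gN k N (par v)) = ell k (INR (dep (par v))).
Proof.
  intros Hv Hd. unfold gN. rewrite (depth_par o par HT v Hv) in Hd.
  rewrite Nat.min_l by lia. rewrite Cmod_R, Rabs_pos_eq. reflexivity.
  pose proof (ell_ge1_nat k (dep (par v))). lra.
Qed.

Lemma Lk_gN k N : Lk o par (S k) (gN (S k) N).
Proof. exists (2 ^ S (S k)). intros v Hv. apply wD_gN; auto. Qed.

Lemma Lk0_gN k N : Lk0 o par (S k) (gN (S k) N).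
Proof.
  split. apply Lk_gN. intros eps Heps. exists (S N). intros v Hv Hd.
  rewrite wD_gN_far by (auto; lia). rewrite Rabs_R0. auto.
Qed.

Lemma normk_gN k N : Rbar_le (normk o par (S k) (gN (S k) N)) (Finite (1 + 2 ^ S (S k))).
Proof.
  apply (normk_le o par) with (M := 2 ^ S (S k)). intros v Hv. apply wD_gN; auto.
  rewrite gN_o, Cmod_R, Rabs_R1. lra.
Qed.

Definition sc (r : R) (f : V -> C) : V -> C := fun v => Cmult (RtoC r) (f v).

Lemma wD_sc k r f v : wD o par k (sc r f) v = Rabs r * wD o par k f v.
Proof.
  unfold wD, Dop, sc. replace (r * f v - r * f (par v))%C with (RtoC r * (f v - f (par v)))%C by ring.
  rewrite Cmod_mult, Cmod_R. ring.
Qed.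

Lemma Lk_sc k r f : Lk o par k f -> Lk o par k (sc r f).
Proof.
  intros [M HM]. exists (Rabs r * M). intros v Hv. rewrite wD_sc.
  apply Rmult_le_compat_l. apply Rabs_pos. auto.
Qed.

Lemma Lk0_sc k r f : Lk0 o par k f -> Lk0 o par k (sc r f).
Proof.
  intros [H1 H2]. split. now apply Lk_sc. intros eps Heps.
  destruct (H2 (eps / (Rabs r + 1))) as [N HN].
  { apply Rdiv_lt_0_compat; auto. pose proof (Rabs_pos r); lra. }
  exists N. intros v Hv Hd. specialize (HN v Hv Hd). rewrite wD_sc.
  rewrite Rabs_mult, Rabs_Rabsolu. pose proof (Rabs_pos r). pose proof (Rabs_pos (wD o par k f v)).
  assert (Rabs r * Rabs (wD o par k f v) <= Rabs r * (eps / (Rabs r + 1))).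
  { apply Rmult_le_compat_l; lra. }
  assert (Rabs r * (eps / (Rabs r + 1)) < eps).
  { apply (Rmult_lt_reg_r (Rabs r + 1)). lra. field_simplify; nra. }
  lra.
Qed.

Lemma normk_sc k r f t : 0 <= r -> Lk o par k f -> normk o par k f = Finite t ->
  normk o par k (sc r f) = Finite (r * t).
Proof.
  intros Hr Hf Ht.
  destruct (normk_fin o par HT k f Hf) as [s [Hs [Hub [Hs0 Hl]]]].
  rewrite Hs in Ht. injection Ht as Ht. subst t.
  destruct (normk_fin o par HT k (sc r f) (Lk_sc k r f Hf)) as [s' [Hs' [Hub' [Hs0' Hl']]]].
  rewrite Hs'. unfold sc at 1. rewrite Cmod_mult, Cmod_R, Rabs_pos_eq by auto.
  assert (s' <= r * s).
  { apply Hl'. intros v Hv. rewrite wD_sc, Rabs_pos_eq by auto. apply Rmult_le_compat_l; auto. }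
  assert (r * s <= s').
  { destruct (Req_dec r 0) as [->|Hr0]. lra.
    assert (s <= s' * / r).
    { apply Hl. intros v Hv. apply pos_mul_le. lra. specialize (Hub' v Hv).
      rewrite wD_sc, Rabs_pos_eq in Hub' by auto. exact Hub'. }
    apply (Rmult_le_compat_l r) in H0; [|lra]. replace (r * (s' * / r)) with s' in H0 by (field; lra).
    exact H0. }
  f_equal. lra.
Qed.

Lemma iter_bound (X : (V -> C) -> Prop) k psi L :
  X onef -> (forall f, X f -> Lk o par k f) -> (forall f, X f -> X (Mop psi f)) -> 0 <= L ->
  (forall f, X f -> Rbar_le (normk o par k (Mop psi f)) (Rbar_mult (Finite L) (normk o par k f))) ->
  forall w, Cmod (psi w) <= L.
Proof.
  intros H1 Hsub Hcl HL Hb w.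
  set (pw := fun n => Nat.iter n (Mop psi) onef).
  assert (HX : forall n, X (pw n)). { induction n. exact H1. apply Hcl. exact IHn. }
  assert (Hn : forall n, Rbar_le (normk o par k (pw n)) (Finite (L ^ n))).
  { induction n.
    - simpl. unfold pw, onef. simpl. rewrite normk_const, Cmod_R, Rabs_R1. simpl. lra.
    - destruct (normk_fin o par HT k _ (Hsub _ (HX n))) as [s [Hs _]].
      specialize (Hb _ (HX n)). rewrite Hs in Hb, IHn. simpl in IHn.
      change (pw (S n)) with (Mop psi (pw n)).
      eapply Rbar_le_trans. exact Hb. simpl. apply Rmult_le_compat_l; auto. }
  assert (Hm : forall n, Cmod (pw n w) = Cmod (psi w) ^ n).
  { induction n. simpl. unfold onef. rewrite Cmod_R, Rabs_R1. reflexivity.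
    change (pw (S n) w) with (Cmult (psi w) (pw n w)). rewrite Cmod_mult, IHn. reflexivity. }
  apply (pow_le_lemma _ _ (1 + INR (dep w))). apply Cmod_ge_0. auto.
  pose proof (pos_INR (dep w)); lra.
  intros n. rewrite <- Hm. pose proof (val_bound o par HT k (pw n) (L ^ n) (Hn n) w). lra.
Qed.

End Tree2.

Section Tree3.
Context {V : Type} (o : V) (par : V -> V) (HT : rooted_tree o par) (k : nat) (psi : V -> C).
Notation dep := (depth o par).

Lemma wD_SS f v : wD o par (S (S k)) f v =
  INR (dep v) * prodl 0 (S k) (INR (dep v)) * ell (S k) (INR (dep v)) * Dop par f v.
Proof. unfold wD. change (prodl 0 (S (S k)) (INR (dep v))) with
  (prodl 0 (S k) (INR (dep v)) * ell (0 + S k) (INR (dep v))). simpl (0 + S k)%nat. ring. Qed.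

Lemma W_eq f v : INR (dep v) * prodl 0 (S k) (INR (dep v)) * ell (S k) (INR (dep v)) * Dop par f v =
  INR (dep v) * prodl 1 (S k) (INR (dep v)) * Dop par f v.
Proof. rewrite <- wD_SS. unfold wD. rewrite prodl_0S. reflexivity. Qed.

Lemma nec (X : (V -> C) -> Prop) : X onef -> (forall N, X (gN o par (S k) N)) ->
  (forall f, X f -> Lk o par (S k) f) -> bounded_on X (normk o par (S k)) psi ->
  Linf psi /\ Lk o par (S (S k)) psi.
Proof.
  intros H1 Hg Hsub [Hcl [Cst [HC Hb]]].
  assert (Hinf := iter_bound o par HT X (S k) psi Cst H1 Hsub Hcl HC Hb).
  split. exists Cst; auto.
  set (G := 1 + 2 ^ S (S k)).
  exists (2 * (Cst * G + Cst * 2 ^ S (S k))). intros v Hv.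
  set (n := dep v). set (g := gN o par (S k) n).
  destruct (normk_fin o par HT (S k) g (Hsub _ (Hg n))) as [s [Hs [Hsub' [Hs0 _]]]].
  assert (HtG : Cmod (g o) + s <= G).
  { pose proof (normk_gN o par HT k n). fold g in H. rewrite Hs in H. exact H. }
  specialize (Hb g (Hg n)). rewrite Hs in Hb. simpl in Hb.
  assert (Hw1 : wD o par (S k) (Mop psi g) v <= Cst * G).
  { pose proof (normk_ge_wD o par (S k) (Mop psi g) v Hv).
    assert (Rbar_le (wD o par (S k) (Mop psi g) v) (Cst * (Cmod (g o) + s))).
    { eapply Rbar_le_trans; eauto. }
    simpl in H0. pose proof (Cmod_ge_0 (g o)). nra. }
  assert (Hw2 : wD o par (S k) g v <= 2 ^ S (S k)) by (apply wD_gN; auto).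
  pose proof (Dop_mult_lo par psi g v) as Hlo.
  pose proof (gN_par o par HT (S k) n v Hv (le_n _)) as Hgp. fold g in Hgp. rewrite Hgp in Hlo.
  rewrite wD_SS. fold n.
  set (Q := INR n * prodl 0 (S k) (INR n)).
  assert (HQ : 0 <= Q). { unfold Q. pose proof (pos_INR n). pose proof (prodl_ge1_nat 0 (S k) n). nra. }
  assert (Hn : n = S (dep (par v))) by (apply depth_par; auto).
  assert (Hell : ell (S k) (INR n) <= 2 * ell (S k) (INR (dep (par v)))).
  { rewrite Hn. apply ell_double_nat. }
  assert (HDp : 0 <= Dop par psi v) by apply Cmod_ge_0.
  assert (HDg : 0 <= Dop par g v) by apply Cmod_ge_0.
  assert (Hpv : Cmod (psi v) <= Cst) by auto.
  unfold wD in Hw1, Hw2. fold n in Hw1, Hw2. fold Q in Hw1, Hw2.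
  assert (Q * (ell (S k) (INR (dep (par v))) * Dop par psi v) <=
          Q * (Dop par (Mop psi g) v + Cmod (psi v) * Dop par g v)).
  { apply Rmult_le_compat_l; auto. }
  assert (Q * (Cmod (psi v) * Dop par g v) <= Cst * (Q * Dop par g v)).
  { rewrite <- Rmult_assoc, (Rmult_comm Q), Rmult_assoc. apply Rmult_le_compat_r. nra. auto. }
  assert (Q * ell (S k) (INR n) * Dop par psi v <= Q * (2 * ell (S k) (INR (dep (par v)))) * Dop par psi v).
  { apply Rmult_le_compat_r; auto. apply Rmult_le_compat_l; auto. }
  assert (Cst * (Q * Dop par g v) <= Cst * 2 ^ S (S k)) by (apply Rmult_le_compat_l; auto).
  nra.
Qed.

Lemma sI_ex : Linf psi -> exists sI, supnorm psi = Finite sI /\ (forall v, Cmod (psi v) <= sI) /\ 0 <= sI.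
Proof.
  intros [M HM]. destruct (lub_fin (fun r => exists v, r = Cmod (psi v))) as [l [Hl [Hub _]]].
  - exists (Cmod (psi o)); eauto.
  - exists M. intros x [v ->]. auto.
  - exists l. split. exact Hl. split. intros v. apply Hub. eauto.
    pose proof (Cmod_ge_0 (psi o)). assert (Cmod (psi o) <= l) by (apply Hub; eauto). lra.
Qed.

Lemma U_ex : Lk o par (S (S k)) psi -> exists U, upper_sup o par (S k) psi = Finite U /\
  (forall v, v <> o -> INR (dep v) * prodl 1 (S k) (INR (dep v)) * Dop par psi v <= U) /\ 0 <= U.
Proof.
  intros [M HM].
  destruct (lub_fin (fun r => exists v, v <> o /\ r = INR (dep v) * prodl 1 (S k) (INR (dep v)) * Dop par psi v)) as [l [Hl [Hub _]]].
  - destruct (exists_nonroot o par HT) as [a Ha]. eexists; exists a; eauto.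
  - exists M. intros x [v [Hv ->]]. rewrite <- W_eq, <- wD_SS. auto.
  - exists l. split. exact Hl. split. intros v Hv. apply Hub. eauto.
    destruct (exists_nonroot o par HT) as [a Ha].
    pose proof (wD_nonneg o par (S (S k)) psi a). rewrite wD_SS, W_eq in H.
    assert (INR (dep a) * prodl 1 (S k) (INR (dep a)) * Dop par psi a <= l) by (apply Hub; eauto). lra.
Qed.

Lemma pw_est sI f v : (forall v, Cmod (psi v) <= sI) -> v <> o ->
  wD o par (S k) (Mop psi f) v <=
  sI * wD o par (S k) f v + (INR (dep v) * prodl 0 (S k) (INR (dep v)) * Dop par psi v) * Cmod (f (par v)).
Proof.
  intros HsI Hv. unfold wD. set (Q := INR (dep v) * prodl 0 (S k) (INR (dep v))).
  assert (HQ : 0 <= Q). { unfold Q. pose proof (pos_INR (dep v)). pose proof (prodl_ge1_nat 0 (S k) (dep v)). nra. }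
  pose proof (Dop_mult_up par psi f v).
  assert (HDf : 0 <= Dop par f v) by apply Cmod_ge_0.
  pose proof (HsI v). pose proof (Cmod_ge_0 (psi v)).
  assert (Q * Dop par (Mop psi f) v <= Q * (Cmod (psi v) * Dop par f v + Cmod (f (par v)) * Dop par psi v))
    by (apply Rmult_le_compat_l; auto).
  assert (Q * (Cmod (psi v) * Dop par f v) <= sI * (Q * Dop par f v)).
  { rewrite <- Rmult_assoc, (Rmult_comm Q), Rmult_assoc. apply Rmult_le_compat_r. nra. auto. }
  nra.
Qed.

Lemma fpar_bound f s v : (forall v, v <> o -> wD o par (S k) f v <= s) -> 0 <= s -> v <> o ->
  Cmod (f (par v)) <= (Cmod (f o) + s) * ell (S k) (INR (dep v)).
Proof.
  intros Hsb Hs0 Hv. pose proof (val_H o par HT (S k) f s Hsb (par v)).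
  rewrite (depth_par o par HT v Hv).
  pose proof (Hs_mono (S k) (dep (par v))). pose proof (Hs_le_ell k (S (dep (par v)))).
  pose proof (ell_ge1_nat (S k) (S (dep (par v)))). pose proof (Cmod_ge_0 (f o)).
  assert (s * Hs (S k) (dep (par v)) <= s * ell (S k) (INR (S (dep (par v))))) by (apply Rmult_le_compat_l; lra).
  nra.
Qed.

Lemma main_est sI U f : (forall v, Cmod (psi v) <= sI) -> 0 <= sI ->
  (forall v, v <> o -> INR (dep v) * prodl 1 (S k) (INR (dep v)) * Dop par psi v <= U) -> 0 <= U ->
  Lk o par (S k) f -> Lk o par (S k) (Mop psi f) /\
  forall t, normk o par (S k) f = Finite t -> Rbar_le (normk o par (S k) (Mop psi f)) (Finite ((sI + U) * t)).
Proof.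
  intros HsI HsI0 HU HU0 Hf.
  destruct (normk_fin o par HT (S k) f Hf) as [s [Hsn [Hub [Hs0 _]]]].
  assert (Hpt : forall v, v <> o -> wD o par (S k) (Mop psi f) v <= sI * s + U * (Cmod (f o) + s)).
  { intros v Hv. pose proof (pw_est sI f v HsI Hv). pose proof (fpar_bound f s v Hub Hs0 Hv).
    pose proof (HU v Hv). rewrite <- W_eq in H1.
    set (W := INR (dep v) * prodl 0 (S k) (INR (dep v)) * Dop par psi v) in *.
    assert (HW : 0 <= W). { unfold W. pose proof (pos_INR (dep v)). pose proof (prodl_ge1_nat 0 (S k) (dep v)).
      pose proof (Cmod_ge_0 (psi v - psi (par v))%C). unfold Dop. apply Rmult_le_pos; [nra|lra]. }
    assert (W * Cmod (f (par v)) <= W * ((Cmod (f o) + s) * ell (S k) (INR (dep v)))) by (apply Rmult_le_compat_l; auto).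
    assert (W * ((Cmod (f o) + s) * ell (S k) (INR (dep v))) = (Cmod (f o) + s) * (W * ell (S k) (INR (dep v)))) by ring.
    assert (W * ell (S k) (INR (dep v)) = INR (dep v) * prodl 0 (S k) (INR (dep v)) * ell (S k) (INR (dep v)) * Dop par psi v) by (unfold W; ring).
    pose proof (Cmod_ge_0 (f o)).
    assert ((Cmod (f o) + s) * (W * ell (S k) (INR (dep v))) <= (Cmod (f o) + s) * U) by (apply Rmult_le_compat_l; lra).
    assert (sI * wD o par (S k) f v <= sI * s) by (apply Rmult_le_compat_l; auto).
    nra. }
  split.
  - exists (sI * s + U * (Cmod (f o) + s)). exact Hpt.
  - intros t Ht. rewrite Hsn in Ht. injection Ht as Ht. subst t.
    apply (normk_le o par) with (M := sI * s + U * (Cmod (f o) + s)). exact Hpt.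
    unfold Mop. rewrite Cmod_mult. pose proof (HsI o). pose proof (Cmod_ge_0 (f o)).
    assert (Cmod (psi o) * Cmod (f o) <= sI * Cmod (f o)) by (apply Rmult_le_compat_r; auto).
    nra.
Qed.

Lemma Hs_nonneg K n : 0 <= Hs K n.
Proof. induction n. simpl; lra. pose proof (Hs_mono K n). lra. Qed.

Lemma Lk0_closed sI U f : (forall v, Cmod (psi v) <= sI) -> 0 <= sI ->
  (forall v, v <> o -> INR (dep v) * prodl 1 (S k) (INR (dep v)) * Dop par psi v <= U) -> 0 <= U ->
  Lk0 o par (S k) f -> Lk0 o par (S k) (Mop psi f).
Proof.
  intros HsI HsI0 HU HU0 [Hf Hf0]. split.
  { apply (main_est sI U f); auto. }
  intros eps Heps.
  destruct (normk_fin o par HT (S k) f Hf) as [s [Hsn [Hub [Hs0 _]]]].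
  set (e := eps / (2 * (sI + U + 1))).
  assert (He : 0 < e) by (unfold e; apply Rdiv_lt_0_compat; lra).
  destruct (Hf0 e He) as [N HN].
  set (A := Cmod (f o) + s * Hs (S k) N).
  assert (HA0 : 0 <= A). { unfold A. pose proof (Cmod_ge_0 (f o)). pose proof (Hs_nonneg (S k) N). nra. }
  assert (Htail : forall w, (N <= dep w)%nat -> Cmod (f w) <= A + e * Hs (S k) (dep w)).
  { intros w Hw. assert (H := val_H_tail o par HT (S k) f A e N).
    assert (H' : Cmod (f w) <= A + e * (Hs (S k) (dep w) - Hs (S k) N)).
    { apply H; auto.
      - intros v Hv Hd. specialize (HN v Hv Hd). pose proof (wD_nonneg o par (S k) f v).
        rewrite Rabs_pos_eq in HN; lra.
      - intros w' Hw'. unfold A. rewrite <- Hw'. apply (val_H o par HT); auto. }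
    pose proof (Hs_nonneg (S k) N). nra. }
  destruct (ell_unbounded k (2 * (U * A + 1) / eps)) as [N2 HN2].
  exists (Nat.max (S N) N2). intros v Hv Hd.
  rewrite Rabs_pos_eq by apply wD_nonneg.
  pose proof (pw_est sI f v HsI Hv) as Hpw.
  set (n := dep v) in *.
  assert (Hn : n = S (dep (par v))) by (apply depth_par; auto).
  assert (Hfp : Cmod (f (par v)) <= A + e * ell (S k) (INR n)).
  { pose proof (Htail (par v) ltac:(lia)). pose proof (Hs_mono (S k) (dep (par v))).
    pose proof (Hs_le_ell k n). rewrite Hn in H1 at 1. lra || nra. }
  set (W := INR n * prodl 0 (S k) (INR n) * Dop par psi v) in *.
  assert (HWl : W * ell (S k) (INR n) <= U).
  { unfold W. replace (INR n * prodl 0 (S k) (INR n) * Dop par psi v * ell (S k) (INR n)) with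
      (INR n * prodl 0 (S k) (INR n) * ell (S k) (INR n) * Dop par psi v) by ring.
    unfold n. rewrite W_eq. apply HU; auto. }
  assert (HW : 0 <= W). { unfold W. pose proof (pos_INR n). pose proof (prodl_ge1_nat 0 (S k) n).
      pose proof (Cmod_ge_0 (psi v - psi (par v))%C). unfold Dop. apply Rmult_le_pos; [nra|lra]. }
  assert (Hell : 2 * (U * A + 1) / eps <= ell (S k) (INR n)) by (apply HN2; lia).
  assert (Hell1 : 1 <= ell (S k) (INR n)) by apply ell_ge1_nat.
  assert (Hwf : wD o par (S k) f v <= e).
  { specialize (HN v Hv ltac:(lia)). pose proof (wD_nonneg o par (S k) f v). rewrite Rabs_pos_eq in HN; lra. }
  (* W * A <= U * A / ell < eps/2 *)
  assert (HWA : W * A * ell (S k) (INR n) <= U * A).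
  { replace (W * A * ell (S k) (INR n)) with (A * (W * ell (S k) (INR n))) by ring.
    rewrite (Rmult_comm U A). apply Rmult_le_compat_l; auto. }
  assert (HWA2 : W * A < eps / 2).
  { assert (2 * (U * A + 1) <= eps * ell (S k) (INR n)).
    { apply (Rmult_le_compat_l eps) in Hell; [|lra]. replace (eps * (2 * (U * A + 1) / eps)) with (2 * (U * A + 1)) in Hell by (field; lra). lra. }
    assert (0 <= U * A) by nra.
    assert (W * A * ell (S k) (INR n) < eps / 2 * ell (S k) (INR n)) by lra.
    apply (Rmult_lt_reg_r (ell (S k) (INR n))). lra. lra. }
  assert (HWe : W * (A + e * ell (S k) (INR n)) <= W * A + e * U).
  { assert (W * (e * ell (S k) (INR n)) <= e * U).
    { replace (W * (e * ell (S k) (INR n))) with (e * (W * ell (S k) (INR n))) by ring.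
      apply Rmult_le_compat_l; lra. }
    nra. }
  assert (W * Cmod (f (par v)) <= W * (A + e * ell (S k) (INR n))) by (apply Rmult_le_compat_l; auto).
  assert (sI * wD o par (S k) f v <= sI * e) by (apply Rmult_le_compat_l; auto).
  assert ((sI + U) * e < eps / 2).
  { unfold e. apply (Rmult_lt_reg_r (2 * (sI + U + 1))). lra. field_simplify; nra. }
  nra.
Qed.

End Tree3.

Section Tree4.
Context {V : Type} (o : V) (par : V -> V) (HT : rooted_tree o par) (k : nat) (psi : V -> C).
Notation dep := (depth o par).

Lemma Lk_psi : Lk o par (S (S k)) psi -> Lk o par (S k) psi.
Proof.
  intros [M HM]. exists M. intros v Hv. specialize (HM v Hv). rewrite wD_SS in HM.
  unfold wD. pose proof (ell_ge1_nat (S k) (dep v)). pose proof (pos_INR (dep v)).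
  pose proof (prodl_ge1_nat 0 (S k) (dep v)). pose proof (Cmod_ge_0 (psi v - psi (par v))%C).
  fold (Dop par psi v) in H2.
  assert (0 <= INR (dep v) * prodl 0 (S k) (INR (dep v)) * Dop par psi v) by (apply Rmult_le_pos; nra).
  nra.
Qed.

Lemma opnorm_est (X : (V -> C) -> Prop) :
  X onef -> (forall f, X f -> Lk o par (S k) f) -> (forall r f, X f -> X (sc r f)) ->
  (forall f, X f -> X (Mop psi f)) -> Linf psi -> Lk o par (S (S k)) psi ->
  opnorm_estimate o par X (S k) psi.
Proof.
  intros HX1 Hsub Hsc Hcl HI HL.
  destruct (sI_ex o psi HI) as [sI [HsI [HsIb HsI0]]].
  destruct (U_ex o par HT k psi HL) as [U [HU [HUb HU0]]].
  assert (Hmop1 : Mop psi onef = psi).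
  { apply functional_extensionality. intros v. unfold Mop, onef. ring. }
  destruct (normk_fin o par HT (S k) psi (Lk_psi HL)) as [s [Hr [_ [Hs0 _]]]].
  assert (H2 : Rbar_le (normk o par (S k) psi) (opnorm X (normk o par (S k)) psi)).
  { unfold opnorm. rewrite Hr. apply lub_ge. exists onef. split. auto. split.
    - unfold onef. rewrite (normk_const o par HT). rewrite Cmod_R, Rabs_R1. simpl. lra.
    - rewrite Hmop1. auto. }
  split; [|split; [exact H2|]].
  - unfold supnorm. apply lub_le. intros x [w ->].
    destruct (opnorm X (normk o par (S k)) psi) as [L| |] eqn:HO; simpl; auto.
    2:{ rewrite Hr in H2. simpl in H2. contradiction. }
    rewrite Hr in H2. simpl in H2. pose proof (Cmod_ge_0 (psi o)).
    apply (iter_bound o par HT X (S k) psi L HX1 Hsub Hcl ltac:(lra)).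
    intros f Hf.
    destruct (normk_fin o par HT (S k) f (Hsub f Hf)) as [c0 [Hc _]].
    set (c := Cmod (f o) + c0) in Hc.
    destruct (normk_fin o par HT (S k) (Mop psi f) (Hsub _ (Hcl f Hf))) as [N0 [HN _]].
    set (N := Cmod (Mop psi f o) + N0) in HN.
    rewrite Hc, HN. simpl.
    assert (Hc0 : 0 <= c).
    { pose proof (normk_ge_o o par HT (S k) f). rewrite Hc in H0. simpl in H0. pose proof (Cmod_ge_0 (f o)). lra. }
    destruct (Req_dec c 0) as [Hc00|Hcn].
    + assert (Hf0 : Mop psi f = fun _ => RtoC 0).
      { apply functional_extensionality. intros w0.
        pose proof (val_bound o par HT (S k) f c ltac:(rewrite Hc; simpl; lra) w0).
        rewrite Hc00, Rmult_0_r in H0. pose proof (Cmod_ge_0 (f w0)).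
        assert (f w0 = 0)%C by (apply Cmod_eq_0; lra). unfold Mop. rewrite H3. ring. }
      rewrite Hf0, (normk_const o par HT), Cmod_0 in HN. injection HN as HN. rewrite <- HN, Hc00. lra.
    + assert (Hcp : 0 < c) by lra.
      set (h := sc (/ c) f).
      assert (Hh : X h) by (apply Hsc; auto).
      assert (Hnh : normk o par (S k) h = Finite 1).
      { unfold h. rewrite (normk_sc o par HT (S k) (/ c) f c); auto.
        f_equal. field. lra. left. apply Rinv_0_lt_compat. lra. }
      assert (Hmh : Mop psi h = sc (/ c) (Mop psi f)).
      { apply functional_extensionality. intros v. unfold Mop, h, sc. ring. }
      assert (Hnmh : normk o par (S k) (Mop psi h) = Finite (/ c * N)).
      { rewrite Hmh. apply normk_sc; auto. left. apply Rinv_0_lt_compat. lra. }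
      assert (HE : Rbar_le (/ c * N) (opnorm X (normk o par (S k)) psi)).
      { unfold opnorm. apply lub_ge. exists h. split. auto. split.
        rewrite Hnh. simpl. lra. auto. }
      rewrite HO in HE. simpl in HE.
      apply (Rmult_le_compat_l c) in HE; [|lra].
      replace (c * (/ c * N)) with N in HE by (field; lra). lra.
  - rewrite HsI, HU. simpl. unfold opnorm. apply lub_le. intros x [f [Hf [Hf1 Hx]]].
    destruct (normk_fin o par HT (S k) f (Hsub f Hf)) as [c0 [Hc [_ [Hc00 _]]]].
    destruct (main_est o par HT k psi sI U f HsIb HsI0 HUb HU0 (Hsub f Hf)) as [_ Hm].
    specialize (Hm _ Hc). rewrite <- Hx in Hm. simpl in Hm.
    rewrite Hc in Hf1. simpl in Hf1. simpl. pose proof (Cmod_ge_0 (f o)).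
    assert ((sI + U) * (Cmod (f o) + c0) <= (sI + U) * 1) by (apply Rmult_le_compat_l; lra).
    lra.
Qed.

End Tree4.

Theorem theorem3p1 (V : Type) (o : V) (par : V -> V) (HT : rooted_tree o par)
  (k : nat) (Hk : (1 <= k)%nat) (psi : V -> C) :
  (bounded_on (Lk o par k) (normk o par k) psi <->
     bounded_on (Lk0 o par k) (normk o par k) psi) /\
  (bounded_on (Lk0 o par k) (normk o par k) psi <->
     (Linf psi /\ Lk o par (S k) psi)) /\
  ((Linf psi /\ Lk o par (S k) psi) ->
     opnorm_estimate o par (Lk o par k) k psi /\
     opnorm_estimate o par (Lk0 o par k) k psi).
Proof.
  destruct k as [|k]; [lia|].
  assert (Hsuf : Linf psi /\ Lk o par (S (S k)) psi ->
    bounded_on (Lk o par (S k)) (normk o par (S k)) psi /\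
    bounded_on (Lk0 o par (S k)) (normk o par (S k)) psi).
  { intros [HI HL].
    destruct (sI_ex o psi HI) as [sI [HsI [HsIb HsI0]]].
    destruct (U_ex o par HT k psi HL) as [U [HU [HUb HU0]]].
    assert (Hb : forall f, Lk o par (S k) f -> Rbar_le (normk o par (S k) (Mop psi f))
        (Rbar_mult (Finite (sI + U)) (normk o par (S k) f))).
    { intros f Hf. destruct (normk_fin o par HT (S k) f Hf) as [c0 [Hc _]].
      rewrite Hc. simpl. apply (main_est o par HT k psi sI U f HsIb HsI0 HUb HU0 Hf). exact Hc. }
    split; split.
    - intros f Hf. apply (main_est o par HT k psi sI U f HsIb HsI0 HUb HU0 Hf).
    - exists (sI + U). split. lra. exact Hb.
    - intros f Hf. apply (Lk0_closed o par HT k psi sI U f HsIb HsI0 HUb HU0 Hf).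
    - exists (sI + U). split. lra. intros f Hf. apply Hb, Hf. }
  assert (Hn1 : bounded_on (Lk o par (S k)) (normk o par (S k)) psi -> Linf psi /\ Lk o par (S (S k)) psi).
  { apply (nec o par HT k psi (Lk o par (S k))).
    - apply Lk_const.
    - intros N. apply (Lk_gN o par HT).
    - auto. }
  assert (Hn2 : bounded_on (Lk0 o par (S k)) (normk o par (S k)) psi -> Linf psi /\ Lk o par (S (S k)) psi).
  { apply (nec o par HT k psi (Lk0 o par (S k))).
    - apply Lk0_const.
    - intros N. apply (Lk0_gN o par HT).
    - intros f [Hf _]. exact Hf. }
  split; [|split].
  - split; intros H. apply Hsuf, Hn1, H. apply Hsuf, Hn2, H.
  - split. exact Hn2. intros H. apply Hsuf, H.
  - intros [HI HL]. destruct (Hsuf (conj HI HL)) as [[Hc1 _] [Hc2 _]]. split.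
    + apply opnorm_est; auto. apply Lk_const. intros r f Hf. apply Lk_sc, Hf.
    + apply opnorm_est; auto. apply Lk0_const. intros f [Hf _]. exact Hf.
      intros r f Hf. apply Lk0_sc, Hf.
Qed.
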